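(* (Weak progress for $\lambda_{\mathrm{ch}}$ configurations.) Let $\cdot ; \cdot \vdash \mathcal{C}$, suppose $\mathcal{C}$ cannot reduce (there is no $\mathcal{C}'$ with $\mathcal{C} \longrightarrow \mathcal{C}'$), and let $\mathcal{C}' = (\nu a_1) \ldots (\nu a_n)(M_1 \parallel \ldots \parallel M_m \parallel a_1(\vec V_1) \parallel \ldots \parallel a_n(\vec V_n))$ be a canonical form of $\mathcal{C}$. Then every leaf of $\mathcal{C}$ is either: (1) a buffer $a_i(\vec V_i)$; (2) a fully-reduced term of the form $\mathbf{return}\ V$; or (3) a term of the form $E[\mathbf{take}\ a_i]$ where $\vec V_i = \epsilon$.
   Context: The calculus $\lambda_{\mathrm{ch}}$. Types $A,B ::= \mathbf{1} \mid A \to B \mid \mathsf{Chan}(A)$; $\alpha$ ranges over variables $x$ and names $a$; values $V,W ::= \alpha \mid \lambda x.M \mid ()$; computations $M,N ::= V\,W \mid \mathbf{let}\ x \Leftarrow M\ \mathbf{in}\ N \mid \mathbf{return}\ V \mid \mathbf{fork}\ M \mid \mathbf{give}\ V\ W \mid \mathbf{take}\ V \mid \mathbf{newCh}$. Value typing: $\Gamma\vdash\alpha:A$ if $\alpha:A\in\Gamma$; $\Gamma\vdash\lambda x.M:A\to B$ if $\Gamma,x:A\vdash M:B$; $\Gamma\vdash():\mathbf 1$. Computation typing: $V\,W : B$ if $V:A\to B$, $W:A$; $\mathbf{let}\ x \Leftarrow M\ \mathbf{in}\ N : B$ if $\Gamma\vdash M:A$, $\Gamma,x:A\vdash N:B$;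 $\mathbf{return}\ V : A$ if $V:A$; $\mathbf{give}\ V\ W : \mathbf{1}$ if $V:A$, $W:\mathsf{Chan}(A)$; $\mathbf{take}\ V : A$ if $V:\mathsf{Chan}(A)$; $\mathbf{fork}\ M : \mathbf{1}$ if $M:\mathbf 1$; $\mathbf{newCh} : \mathsf{Chan}(A)$ for any $A$. Evaluation contexts $E ::= [\,] \mid \mathbf{let}\ x \Leftarrow E\ \mathbf{in}\ M$; term reduction: $(\lambda x.M)V \longrightarrow_{\mathsf{M}} M\{V/x\}$, $\mathbf{let}\ x \Leftarrow \mathbf{return}\ V\ \mathbf{in}\ M \longrightarrow_{\mathsf{M}} M\{V/x\}$, $E[M_1]\longrightarrow_{\mathsf{M}} E[M_2]$ if $M_1\longrightarrow_{\mathsf{M}} M_2$. Configurations $\mathcal{C},\mathcal{D} ::= \mathcal{C} \parallel \mathcal{D} \mid (\nu a)\mathcal{C} \mid a(\vec V) \mid M$ ($a(\vec V)$ a buffer named $a$ holding $\vec V=V_1\cdot\ldots\cdot V_n$; $\epsilon$ the empty sequence). Configuration contexts $G ::= [\,] \mid G \parallel \mathcal{C} \mid (\nu a)G$. Configuration typing $\Gamma;\Delta\vdash\mathcal{C}$ ($\Delta$ linear): (Par) $\Gamma;\Delta_1\vdash\mathcal{C}_1$, $\Gamma;\Delta_2\vdash\mathcal{C}_2$ give $\Gamma;\Delta_1,\Delta_2\vdash\mathcal{C}_1\parallel\mathcal{C}_2$; (Chan) $\Gamma,a:\mathsf{Chan}(A);\Delta,a:A\vdash\mathcal{C}$ gives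 $\Gamma;\Delta\vdash(\nu a)\mathcal{C}$; (Buf) $\Gamma\vdash V_i:A$ for all $i$ gives $\Gamma;a:A\vdash a(\vec V)$; (Term) $\Gamma\vdash M:\mathbf 1$ gives $\Gamma;\cdot\vdash M$. Structural congruence $\equiv$: least congruence closed under $G[-]$ with commutativity/associativity of $\parallel$ and $\mathcal{C}\parallel(\nu a)\mathcal{D}\equiv(\nu a)(\mathcal{C}\parallel\mathcal{D})$ if $a\notin\mathsf{fv}(\mathcal{C})$. Reduction $\longrightarrow$ (modulo $\equiv$): $E[\mathbf{give}\ W\ a] \parallel a(\vec V) \longrightarrow E[\mathbf{return}\ ()] \parallel a(\vec V \cdot W)$; $E[\mathbf{take}\ a] \parallel a(W\cdot\vec V) \longrightarrow E[\mathbf{return}\ W] \parallel a(\vec V)$; $E[\mathbf{fork}\ M] \longrightarrow E[\mathbf{return}\ ()] \parallel M$; $E[\mathbf{newCh}] \longrightarrow (\nu a)(E[\mathbf{return}\ a] \parallel a(\epsilon))$, $a$ fresh; $G[M_1]\longrightarrow G[M_2]$ if $M_1\longrightarrow_{\mathsf{M}} M_2$; $G[\mathcal{C}_1]\longrightarrow G[\mathcal{C}_2]$ if $\mathcal{C}_1\longrightarrow\mathcal{C}_2$. A configuration $\mathcal{C}'$ is a canonical form of $\mathcal{C}$ if $\mathcal{C}'\equiv\mathcal{C}$ and $\mathcal{C}'$ can be written $(\nu a_1) \ldots (\nu a_n)(M_1 \parallel \ldots \parallel M_m \parallel a_1(\vec V_1) \parallel \ldots \parallel a_n(\vec V_n))$.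 A leaf of a configuration is a subconfiguration without subconfigurations, i.e. a term or a buffer. *)

(* Defs.v *)
(* Syntax, typing and semantics of the calculus lambda_ch.
   Variables (bound by lambda and let) use de Bruijn indices; channel names
   are named (nat), bound by nu in configurations. *)
From Stdlib Require Import List Arith Permutation.
Import ListNotations.

Inductive ty : Type :=
| TyUnit : ty
| TyArr : ty -> ty -> ty
| TyChan : ty -> ty.

Inductive val : Type :=
| VVar : nat -> val
| VName : nat -> val
| VLam : tm -> val             (* lambda x. M  (binds index 0 in M) *)
| VUnit : val
with tm : Type :=
| TApp : val -> val -> tm
| TLet : tm -> tm -> tm                (* let x <= M in N (binds index 0 in N) *)
| TRet : val -> tm
| TFork : tm -> tm
| TGive : val -> val -> tm
| TTake : val -> tm
| TNewCh : tm.

Fixpoint vlift (k : nat) (V : val) : val :=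
  match V with
  | VVar n => if k <=? n then VVar (S n) else VVar n
  | VName a => VName a
  | VLam M => VLam (tlift (S k) M)
  | VUnit => VUnit
  end
with tlift (k : nat) (M : tm) : tm :=
  match M with
  | TApp V W => TApp (vlift k V) (vlift k W)
  | TLet M N => TLet (tlift k M) (tlift (S k) N)
  | TRet V => TRet (vlift k V)
  | TFork M => TFork (tlift k M)
  | TGive V W => TGive (vlift k V) (vlift k W)
  | TTake V => TTake (vlift k V)
  | TNewCh => TNewCh
  end.

(* vsubst k U V : substitute U for variable k in V (and lower the
   variables above k) *)
Fixpoint vsubst (k : nat) (U : val) (V : val) : val :=
  match V with
  | VVar n => if n =? k then U else if k <? n then VVar (pred n) else VVar n
  | VName a => VName a
  | VLam M => VLam (tsubst (S k) (vlift 0 U) M)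
  | VUnit => VUnit
  end
with tsubst (k : nat) (U : val) (M : tm) : tm :=
  match M with
  | TApp V W => TApp (vsubst k U V) (vsubst k U W)
  | TLet M N => TLet (tsubst k U M) (tsubst (S k) (vlift 0 U) N)
  | TRet V => TRet (vsubst k U V)
  | TFork M => TFork (tsubst k U M)
  | TGive V W => TGive (vsubst k U V) (vsubst k U W)
  | TTake V => TTake (vsubst k U V)
  | TNewCh => TNewCh
  end.

Definition subst1 (M : tm) (V : val) : tm := tsubst 0 V M.

Inductive ectx : Type :=
| EHole : ectx
| ELet : ectx -> tm -> ectx.

Fixpoint plug (E : ectx) (M : tm) : tm :=
  match E with
  | EHole => M
  | ELet E' N => TLet (plug E' M) N
  end.

Inductive tred : tm -> tm -> Prop :=
| tred_beta : forall M V, tred (TApp (VLam M) V) (subst1 M V)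
| tred_let : forall V M, tred (TLet (TRet V) M) (subst1 M V)
| tred_ctx : forall E M1 M2, tred M1 M2 -> tred (plug E M1) (plug E M2).

Inductive config : Type :=
| CPar : config -> config -> config
| CNu : nat -> config -> config
| CBuf : nat -> list val -> config
| CTm : tm -> config.

Fixpoint vnames (V : val) : list nat :=
  match V with
  | VVar _ => []
  | VName a => [a]
  | VLam M => tnames M
  | VUnit => []
  end
with tnames (M : tm) : list nat :=
  match M with
  | TApp V W => vnames V ++ vnames W
  | TLet M N => tnames M ++ tnames N
  | TRet V => vnames V
  | TFork M => tnames M
  | TGive V W => vnames V ++ vnames W
  | TTake V => vnames V
  | TNewCh => []
  end.

Fixpoint cfn (C : config) : list nat :=
  match C with
  | CPar C D => cfn C ++ cfn D
  | CNu a C => filter (fun b => negb (b =? a)) (cfn C)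
  | CBuf a Vs => a :: flat_map vnames Vs
  | CTm M => tnames M
  end.

Fixpoint cnames (C : config) : list nat :=
  match C with
  | CPar C D => cnames C ++ cnames D
  | CNu a C => a :: cnames C
  | CBuf a Vs => a :: flat_map vnames Vs
  | CTm M => tnames M
  end.

Definition rn (a b c : nat) : nat := if c =? a then b else c.

Fixpoint vren (a b : nat) (V : val) : val :=
  match V with
  | VVar n => VVar n
  | VName c => VName (rn a b c)
  | VLam M => VLam (tren a b M)
  | VUnit => VUnit
  end
with tren (a b : nat) (M : tm) : tm :=
  match M with
  | TApp V W => TApp (vren a b V) (vren a b W)
  | TLet M N => TLet (tren a b M) (tren a b N)
  | TRet V => TRet (vren a b V)
  | TFork M => TFork (tren a b M)
  | TGive V W => TGive (vren a b V) (vren a b W)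
  | TTake V => TTake (vren a b V)
  | TNewCh => TNewCh
  end.

Fixpoint cren (a b : nat) (C : config) : config :=
  match C with
  | CPar C D => CPar (cren a b C) (cren a b D)
  | CNu c C => if c =? a then CNu c C else CNu c (cren a b C)
  | CBuf c Vs => CBuf (rn a b c) (map (vren a b) Vs)
  | CTm M => CTm (tren a b M)
  end.

Inductive sc : config -> config -> Prop :=
| sc_refl : forall C, sc C C
| sc_sym : forall C D, sc C D -> sc D C
| sc_trans : forall C D E, sc C D -> sc D E -> sc C E
| sc_comm : forall C D, sc (CPar C D) (CPar D C)
| sc_assoc : forall C D E, sc (CPar C (CPar D E)) (CPar (CPar C D) E)
| sc_extr : forall a C D, ~ In a (cfn C) -> sc (CPar C (CNu a D)) (CNu a (CPar C D))
| sc_alpha : forall a b C, ~ In b (cnames C) -> sc (CNu a C) (CNu b (cren a b C))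
| sc_par : forall C D E, sc C D -> sc (CPar C E) (CPar D E)
| sc_nu : forall a C D, sc C D -> sc (CNu a C) (CNu a D).

Inductive red : config -> config -> Prop :=
| red_give : forall E W a Vs,
    red (CPar (CTm (plug E (TGive W (VName a)))) (CBuf a Vs))
        (CPar (CTm (plug E (TRet VUnit))) (CBuf a (Vs ++ [W])))
| red_take : forall E W a Vs,
    red (CPar (CTm (plug E (TTake (VName a)))) (CBuf a (W :: Vs)))
        (CPar (CTm (plug E (TRet W))) (CBuf a Vs))
| red_fork : forall E M,
    red (CTm (plug E (TFork M))) (CPar (CTm (plug E (TRet VUnit))) (CTm M))
| red_newch : forall E a, ~ In a (tnames (plug E TNewCh)) ->
    red (CTm (plug E TNewCh))
        (CNu a (CPar (CTm (plug E (TRet (VName a)))) (CBuf a [])))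
| red_term : forall M1 M2, tred M1 M2 -> red (CTm M1) (CTm M2)
| red_par : forall C1 C2 D, red C1 C2 -> red (CPar C1 D) (CPar C2 D)
| red_nu : forall a C1 C2, red C1 C2 -> red (CNu a C1) (CNu a C2)
| red_sc : forall C C1 C2 C', sc C C1 -> red C1 C2 -> sc C2 C' -> red C C'.

(* Gamma: names context (first match wins); X: de Bruijn variable context *)
Fixpoint nlookup (G : list (nat * ty)) (a : nat) : option ty :=
  match G with
  | [] => None
  | (b, A) :: G' => if b =? a then Some A else nlookup G' a
  end.

Inductive vtype (G : list (nat * ty)) : list ty -> val -> ty -> Prop :=
| vt_var : forall X n A, nth_error X n = Some A -> vtype G X (VVar n) A
| vt_name : forall X a A, nlookup G a = Some A -> vtype G X (VName a) A
| vt_lam : forall X M A B, ttype G (A :: X) M B -> vtype G X (VLam M) (TyArr A B)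
| vt_unit : forall X, vtype G X VUnit TyUnit
with ttype (G : list (nat * ty)) : list ty -> tm -> ty -> Prop :=
| tt_app : forall X V W A B, vtype G X V (TyArr A B) -> vtype G X W A -> ttype G X (TApp V W) B
| tt_let : forall X M N A B, ttype G X M A -> ttype G (A :: X) N B -> ttype G X (TLet M N) B
| tt_ret : forall X V A, vtype G X V A -> ttype G X (TRet V) A
| tt_give : forall X V W A, vtype G X V A -> vtype G X W (TyChan A) -> ttype G X (TGive V W) TyUnit
| tt_take : forall X V A, vtype G X V (TyChan A) -> ttype G X (TTake V) A
| tt_fork : forall X M, ttype G X M TyUnit -> ttype G X (TFork M) TyUnit
| tt_newch : forall X A, ttype G X TNewCh (TyChan A).

(* Gamma; Delta |- C  (Delta linear, with pairwise distinct names) *)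
Inductive ctype : list (nat * ty) -> list (nat * ty) -> config -> Prop :=
| ct_par : forall G D D1 D2 C1 C2,
    ctype G D1 C1 -> ctype G D2 C2 ->
    Permutation D (D1 ++ D2) -> NoDup (map fst D) ->
    ctype G D (CPar C1 C2)
| ct_chan : forall G D a A C,
    ~ In a (map fst D) ->
    ctype ((a, TyChan A) :: G) ((a, A) :: D) C ->
    ctype G D (CNu a C)
| ct_buf : forall G a A Vs,
    Forall (fun V => vtype G [] V A) Vs ->
    ctype G [(a, A)] (CBuf a Vs)
| ct_term : forall G M,
    ttype G [] M TyUnit -> ctype G [] (CTm M).

Fixpoint parl (c : config) (cs : list config) : config :=
  match cs with
  | [] => c
  | d :: ds => CPar c (parl d ds)
  end.

Definition nus (ns : list nat) (C : config) : config := fold_right CNu C ns.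

(* C' = (nu a_1)...(nu a_n)(M_1 || ... || M_m || a_1(V_1) || ... || a_n(V_n)),
   with ns = [a_1;...;a_n] pairwise distinct, Ms = [M_1;...;M_m],
   Vss = [V_1;...;V_n] *)
Definition canonical_shape (C' : config) (ns : list nat) (Ms : list tm)
    (Vss : list (list val)) : Prop :=
  length ns = length Vss /\ NoDup ns /\
  exists c cs,
    map CTm Ms ++ map (fun p => CBuf (fst p) (snd p)) (combine ns Vss) = c :: cs /\
    C' = nus ns (parl c cs).

Definition canonical_form_of (C' C : config) (ns : list nat) (Ms : list tm)
    (Vss : list (list val)) : Prop :=
  sc C' C /\ canonical_shape C' ns Ms Vss.

Inductive leaf : config -> config -> Prop :=
| leaf_tm : forall M, leaf (CTm M) (CTm M)
| leaf_buf : forall a Vs, leaf (CBuf a Vs) (CBuf a Vs)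
| leaf_parl : forall C D L, leaf C L -> leaf (CPar C D) L
| leaf_parr : forall C D L, leaf D L -> leaf (CPar C D) L
| leaf_nu : forall a C L, leaf C L -> leaf (CNu a C) L.

(* Main.v *)
Require Import Defs.
From Stdlib Require Import List Arith Lia Permutation.
Import ListNotations.

Inductive vtyC : list ty -> val -> ty -> Prop :=
| vc_var : forall X n A, nth_error X n = Some A -> vtyC X (VVar n) A
| vc_name : forall X a A, vtyC X (VName a) (TyChan A)
| vc_lam : forall X M A B, ttyC (A :: X) M B -> vtyC X (VLam M) (TyArr A B)
| vc_unit : forall X, vtyC X VUnit TyUnit
with ttyC : list ty -> tm -> ty -> Prop :=
| tc_app : forall X V W A B, vtyC X V (TyArr A B) -> vtyC X W A -> ttyC X (TApp V W) B
| tc_let : forall X M N A B, ttyC X M A -> ttyC (A :: X) N B -> ttyC X (TLet M N) B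
| tc_ret : forall X V A, vtyC X V A -> ttyC X (TRet V) A
| tc_give : forall X V W A, vtyC X V A -> vtyC X W (TyChan A) -> ttyC X (TGive V W) TyUnit
| tc_take : forall X V A, vtyC X V (TyChan A) -> ttyC X (TTake V) A
| tc_fork : forall X M, ttyC X M TyUnit -> ttyC X (TFork M) TyUnit
| tc_newch : forall X A, ttyC X TNewCh (TyChan A).

Scheme vtype_ind2 := Induction for vtype Sort Prop
  with ttype_ind2 := Induction for ttype Sort Prop.
Combined Scheme vt_tt_mut from vtype_ind2, ttype_ind2.
Scheme val_ind2 := Induction for val Sort Prop
  with tm_ind2 := Induction for tm Sort Prop.
Combined Scheme valtm_mut from val_ind2, tm_ind2.

Lemma ty_to_C G : (forall a T, nlookup G a = Some T -> exists A, T = TyChan A) ->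
  (forall X V A, vtype G X V A -> vtyC X V A) /\ (forall X M A, ttype G X M A -> ttyC X M A).
Proof.
  intros HG. apply vt_tt_mut; intros; try (econstructor; eauto; fail).
  destruct (HG _ _ e) as [A' ->]; constructor.
Qed.

Lemma ty_names G :
  (forall X V A, vtype G X V A -> forall x, In x (vnames V) -> nlookup G x <> None) /\
  (forall X M A, ttype G X M A -> forall x, In x (tnames M) -> nlookup G x <> None).
Proof.
  apply vt_tt_mut; simpl; intros; repeat rewrite in_app_iff in *; try (intuition eauto; fail).
  destruct H as [<-|[]]; congruence.
Qed.

Lemma tyC_ren a b :
  (forall V X A, vtyC X (vren a b V) A <-> vtyC X V A) /\
  (forall M X A, ttyC X (tren a b M) A <-> ttyC X M A).
Proof.
  apply valtm_mut; simpl; intros; split; intro Hy; inversion Hy; subst;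
  econstructor; try (match goal with IH: forall _ _, _ <-> _ |- _ => apply IH; eassumption end);
  eauto.
Qed.

Lemma names_ren a b :
  (forall V, vnames (vren a b V) = map (rn a b) (vnames V)) /\
  (forall M, tnames (tren a b M) = map (rn a b) (tnames M)).
Proof.
  apply valtm_mut; simpl; intros; rewrite ?map_app; congruence.
Qed.

Lemma in_map_rn a b x l : In x (map (rn a b) l) <-> (In x l /\ x <> a) \/ (x = b /\ In a l).
Proof.
  rewrite in_map_iff; unfold rn; split.
  - intros [y [Hy Hin]]. destruct (Nat.eqb_spec y a); subst; auto.
  - intros [[H1 H2]|[-> H]].
    + exists x; split; auto. destruct (Nat.eqb_spec x a); congruence.
    + exists a; rewrite Nat.eqb_refl; auto.
Qed.

Lemma flat_ren a b Vs : flat_map vnames (map (vren a b) Vs) = map (rn a b) (flat_map vnames Vs).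
Proof.
  induction Vs; simpl; auto. rewrite map_app, IHVs, (proj1 (names_ren a b)); auto.
Qed.

Lemma cfn_cnames C x : In x (cfn C) -> In x (cnames C).
Proof.
  induction C; simpl; intros; rewrite ?in_app_iff in *; try tauto.
  rewrite filter_In in H; tauto.
Qed.

Lemma cfn_cren a b C : ~ In b (cnames C) -> forall x,
  In x (cfn (cren a b C)) <-> (In x (cfn C) /\ x <> a) \/ (x = b /\ In a (cfn C)).
Proof.
  induction C; simpl; intros Hb x.
  - rewrite in_app_iff in Hb. rewrite !in_app_iff, IHC1, IHC2 by tauto. tauto.
  - destruct (Nat.eqb_spec n a).
    + subst. simpl. rewrite !filter_In. destruct (Nat.eqb_spec x a); destruct (Nat.eqb_spec a a); simpl;
      intuition congruence.
    + simpl. rewrite !filter_In, IHC by tauto.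
      destruct (Nat.eqb_spec x n); destruct (Nat.eqb_spec a n); simpl; intuition (subst; try congruence).
  - rewrite flat_ren. change (In x (map (rn a b) (n :: flat_map vnames l)) <->
      In x (n :: flat_map vnames l) /\ x <> a \/ x = b /\ In a (n :: flat_map vnames l)).
    apply in_map_rn.
  - rewrite (proj2 (names_ren a b)), in_map_rn. tauto.
Qed.

Fixpoint allok (C : config) : Prop :=
  match C with
  | CPar C D => allok C /\ allok D
  | CNu _ C => allok C
  | CBuf _ _ => True
  | CTm M => exists A, ttyC [] M A
  end.

Lemma allok_cren a b C : allok (cren a b C) <-> allok C.
Proof.
  induction C; simpl; try tauto.
  - destruct (n =? a); simpl; tauto.
  - split; intros [A HA]; exists A; apply (proj2 (tyC_ren a b)); auto.
Qed.

Lemma sc_allok C D : sc C D -> (allok C <-> allok D).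
Proof.
  induction 1; simpl; try tauto.
  rewrite allok_cren; tauto.
Qed.

Lemma sc_cfn C D : sc C D -> forall x, In x (cfn C) <-> In x (cfn D).
Proof.
  induction 1; simpl; intros x; try (rewrite ?in_app_iff, ?filter_In; firstorder; fail).
  - rewrite !in_app_iff, !filter_In, !in_app_iff.
    destruct (Nat.eqb_spec x a); subst; simpl; intuition.
  - rewrite !filter_In, cfn_cren by auto.
    destruct (Nat.eqb_spec x a); destruct (Nat.eqb_spec x b); subst; simpl; intuition;
      try congruence.
    apply cfn_cnames in H1. tauto.
Qed.

Lemma ctype_inv G D C : ctype G D C ->
  (forall a T, nlookup G a = Some T -> exists A, T = TyChan A) ->
  allok C /\ (forall x, In x (cfn C) -> nlookup G x <> None \/ In x (map fst D)).
Proof.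
  induction 1; intros HG; simpl.
  - destruct (IHctype1 HG) as [A1 B1]; destruct (IHctype2 HG) as [A2 B2]. split; auto.
    intros x Hx. rewrite in_app_iff in Hx.
    assert (Hp : Permutation (map fst D) (map fst D1 ++ map fst D2)) by
      (rewrite <- map_app; apply Permutation_map; auto).
    destruct Hx as [Hx|Hx]; [destruct (B1 x Hx)|destruct (B2 x Hx)]; auto; right;
      apply (Permutation_in _ (Permutation_sym Hp)); apply in_app_iff; auto.
  - destruct IHctype as [A1 B1].
    { intros b T. simpl. destruct (a =? b); eauto. intros [= <-]; eauto. }
    split; auto. intros x Hx. rewrite filter_In in Hx. destruct Hx as [Hx Hn].
    destruct (B1 x Hx) as [H1|H1]; simpl in H1; destruct (Nat.eqb_spec a x); subst;
      rewrite ?Nat.eqb_refl in Hn; simpl in Hn; try discriminate; auto.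
    destruct H1; auto; congruence.
  - split; auto. intros x [->|Hx]; [right; simpl; auto|left].
    apply in_flat_map in Hx. destruct Hx as [V [HV Hx]].
    rewrite Forall_forall in H. eapply (proj1 (ty_names G)); eauto.
  - split.
    + exists TyUnit. eapply (proj2 (ty_to_C G HG)); eauto.
    + intros x Hx. left. eapply (proj2 (ty_names G)); eauto.
Qed.

Lemma progress M A : ttyC [] M A ->
  (exists V, M = TRet V) \/ (exists M', tred M M') \/
  (exists E, (exists N, M = plug E (TFork N)) \/ M = plug E TNewCh \/
     (exists W a, M = plug E (TGive W (VName a))) \/ (exists a, M = plug E (TTake (VName a)))).
Proof.
  revert A; induction M; intros A0 HM; inversion HM; subst.
  - inversion H2; subst; try (destruct n; discriminate).
    right; left; eexists; apply tred_beta.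
  - destruct (IHM1 _ H2) as [[V ->]|[[M' HM']|[E HE]]].
    + right; left; eexists; apply tred_let.
    + right; left; exists (TLet M' M2). apply (tred_ctx (ELet EHole M2)); auto.
    + right; right; exists (ELet E M2); simpl.
      destruct HE as [[N ->]|[->|[[W [a ->]]|[a ->]]]]; eauto 10.
  - left; eauto.
  - right; right; exists EHole; simpl; eauto.
  - inversion H4; subst; try (destruct n; discriminate).
    right; right; exists EHole; simpl; eauto 10.
  - inversion H1; subst; try (destruct n; discriminate).
    right; right; exists EHole; simpl; eauto 10.
  - right; right; exists EHole; simpl; eauto.
Qed.

Definition pl (l : list config) : config :=
  match l with [] => CTm TNewCh | x :: r => parl x r end.

Lemma pl_cons x l : l <> [] -> pl (x :: l) = CPar x (pl l).
Proof. destruct l; simpl; congruence. Qed.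

Lemma sc_parr C D E : sc C D -> sc (CPar E C) (CPar E D).
Proof.
  intros H. eapply sc_trans; [apply sc_comm|]. eapply sc_trans; [apply sc_par, H|apply sc_comm].
Qed.

Lemma perm_sc l l' : Permutation l l' -> l <> [] -> sc (pl l) (pl l').
Proof.
  induction 1; intros Hne.
  - congruence.
  - destruct l as [|y r].
    + apply Permutation_nil in H; subst; apply sc_refl.
    + destruct l' as [|z r']. { apply Permutation_length in H; discriminate. }
      rewrite !pl_cons by congruence. apply sc_parr, IHPermutation; congruence.
  - destruct l as [|z r].
    + apply sc_comm.
    + rewrite !pl_cons by congruence.
      eapply sc_trans; [apply sc_assoc|].
      eapply sc_trans; [apply sc_par, sc_comm|]. apply sc_sym, sc_assoc.
  - assert (l' <> []).
    { intro; subst; apply Permutation_length in H; destruct l; simpl in *; congruence. }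
    eapply sc_trans; eauto.
Qed.

Lemma front X Y l : In X l -> red X Y -> exists Z, red (pl l) Z.
Proof.
  intros Hin Hr. apply in_split in Hin. destruct Hin as [l1 [l2 ->]].
  assert (Hp : sc (pl (l1 ++ X :: l2)) (pl (X :: l1 ++ l2))).
  { apply perm_sc. apply Permutation_sym, Permutation_middle. destruct l1; simpl; congruence. }
  destruct (l1 ++ l2) as [|r rs] eqn:E.
  - exists Y. eapply red_sc; [exact Hp| exact Hr| apply sc_refl].
  - rewrite pl_cons in Hp by congruence.
    eexists. eapply red_sc; [exact Hp| apply red_par, Hr| apply sc_refl].
Qed.

Lemma front2 X Y R l : In X l -> In Y l -> X <> Y -> red (CPar X Y) R -> exists Z, red (pl l) Z.
Proof.
  intros HX HY Hne Hr. apply in_split in HX. destruct HX as [l1 [l2 ->]].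
  assert (HY' : In Y (l1 ++ l2)).
  { apply in_app_iff in HY; apply in_app_iff. destruct HY as [|[|]]; auto; congruence. }
  apply in_split in HY'. destruct HY' as [m1 [m2 Hm]].
  assert (Hp : sc (pl (l1 ++ X :: l2)) (pl (X :: Y :: m1 ++ m2))).
  { apply perm_sc; [|destruct l1; simpl; congruence].
    eapply Permutation_trans; [apply Permutation_sym, Permutation_middle|].
    apply perm_skip. rewrite Hm. apply Permutation_sym, Permutation_middle. }
  destruct (m1 ++ m2) as [|r rs] eqn:E.
  - exists R. eapply red_sc; [exact Hp| exact Hr| apply sc_refl].
  - rewrite pl_cons, pl_cons in Hp by congruence.
    eexists. eapply red_sc; [eapply sc_trans; [exact Hp|apply sc_assoc]| apply red_par, Hr| apply sc_refl].
Qed.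

Lemma red_nus ns P Q : red P Q -> red (nus ns P) (nus ns Q).
Proof. induction ns; simpl; auto using red_nu. Qed.

Lemma cfn_nus ns P x : In x (cfn (nus ns P)) <-> In x (cfn P) /\ ~ In x ns.
Proof.
  induction ns; simpl. tauto.
  rewrite filter_In, IHns. destruct (Nat.eqb_spec x a); simpl; intuition congruence.
Qed.

Lemma cfn_pl l X x : In X l -> In x (cfn X) -> In x (cfn (pl l)).
Proof.
  induction l as [|y r IH]; simpl; [tauto|]. intros [->|H] Hx.
  - destruct r; simpl; auto. rewrite in_app_iff; auto.
  - destruct r; [destruct H|]. simpl. rewrite in_app_iff; right; apply (IH H Hx).
Qed.

Lemma allok_pl l X : allok (pl l) -> In X l -> allok X.
Proof.
  induction l as [|y r IH]; simpl; [tauto|]. intros Ha [->|H].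
  - destruct r; simpl in *; tauto.
  - destruct r; [destruct H|]. simpl in Ha. apply IH; tauto.
Qed.

Lemma allok_nus ns P : allok (nus ns P) -> allok P.
Proof. induction ns; simpl; auto. Qed.

Lemma leaf_nus ns P L : leaf (nus ns P) L -> leaf P L.
Proof. induction ns; simpl; auto. intros H; inversion H; auto. Qed.

Lemma leaf_pl c cs L : leaf (parl c cs) L -> exists X, In X (c :: cs) /\ leaf X L.
Proof.
  revert c; induction cs as [|y r IH]; simpl; intros c.
  - intros; exists c; auto.
  - intros H; inversion H; subst; eauto.
    destruct (IH _ H3) as [X [HX HL]]; eauto.
Qed.

Lemma tnames_plug E M x : In x (tnames M) -> In x (tnames (plug E M)).
Proof. induction E; simpl; auto. intros; apply in_app_iff; auto. Qed.

Lemma nth_combine {A B} (l1 : list A) (l2 : list B) i x y :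
  nth_error (combine l1 l2) i = Some (x, y) <-> nth_error l1 i = Some x /\ nth_error l2 i = Some y.
Proof.
  revert l2 i; induction l1; destruct l2, i; simpl; try (intuition congruence; fail).
  - apply IHl1.
Qed.

Lemma fresh (l : list nat) : exists a, ~ In a l.
Proof.
  exists (S (list_max l)). intro H.
  assert (Hf : Forall (fun k => k <= list_max l) l) by (apply list_max_le; lia).
  rewrite Forall_forall in Hf. specialize (Hf _ H). lia.
Qed.

Theorem theorem8 (C C' : config) (ns : list nat) (Ms : list tm)
    (Vss : list (list val)) :
  ctype [] [] C ->
  (forall C2, ~ red C C2) ->
  canonical_form_of C' C ns Ms Vss ->
  forall L, leaf C' L ->
    (exists i a Vs, nth_error ns i = Some a /\ nth_error Vss i = Some Vs /\
                    L = CBuf a Vs)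
    \/ (exists V, L = CTm (TRet V))
    \/ (exists E i a, nth_error ns i = Some a /\ nth_error Vss i = Some [] /\
                      L = CTm (plug E (TTake (VName a)))).
Proof.
  intros HC Hnr [Hsc [Hlen [Hnd [c [cs [Hl HC']]]]]] L HL.
  assert (Hnr' : forall Z, ~ red C' Z).
  { intros Z HZ. apply (Hnr Z). eapply red_sc; [apply sc_sym, Hsc|exact HZ|apply sc_refl]. }
  destruct (ctype_inv _ _ _ HC) as [Hok Hcl].
  { intros a T H; discriminate. }
  apply (sc_allok _ _ Hsc) in Hok.
  assert (Hcl' : forall x, ~ In x (cfn C')).
  { intros x Hx. apply (sc_cfn _ _ Hsc) in Hx. destruct (Hcl x Hx) as [H|H]; [apply H; reflexivity|exact H]. }
  clear Hcl Hsc Hnr HC.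
  subst C'.
  apply leaf_nus in HL. apply leaf_pl in HL. destruct HL as [X [HX HL]].
  assert (Hred : forall Y, red X Y -> False).
  { intros Y HY. apply (Hnr' (nus ns (pl (c :: cs)))).
    destruct (front X Y (c :: cs) HX HY) as [Z HZ]. exfalso. apply (Hnr' (nus ns Z)).
    apply red_nus; exact HZ. }
  assert (Hbuf : forall a, In a ns -> exists i Vs, nth_error ns i = Some a /\ nth_error Vss i = Some Vs
     /\ In (CBuf a Vs) (c :: cs)).
  { intros a Ha. apply In_nth_error in Ha. destruct Ha as [i Hi].
    destruct (nth_error Vss i) as [Vs|] eqn:HV.
    2:{ apply nth_error_None in HV. assert (i < length ns) by (apply nth_error_Some; congruence). lia. }
    exists i, Vs. split; [auto|split; [auto|]].
    rewrite <- Hl. apply in_app_iff. right.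
    change (CBuf a Vs) with ((fun p => CBuf (fst p) (snd p)) (a, Vs)). apply in_map.
    eapply nth_error_In. apply nth_combine. eauto. }
  assert (Hin2 : forall X', In X' (c :: cs) -> forall x, In x (cfn X') -> In x ns).
  { intros X' HX' x Hx. destruct (In_dec Nat.eq_dec x ns); auto. exfalso. apply (Hcl' x).
    apply cfn_nus. split; auto. apply (cfn_pl (c :: cs) X'); auto. }
  assert (Hpair : forall Y R, In Y (c :: cs) -> X <> Y -> red (CPar X Y) R -> False).
  { intros Y R HY Hne HR. destruct (front2 X Y R (c :: cs) HX HY Hne HR) as [Z HZ].
    apply (Hnr' (nus ns Z)). apply red_nus; exact HZ. }
  assert (HX' := HX). rewrite <- Hl in HX'. apply in_app_iff in HX'. destruct HX' as [HX'|HX'].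
  - apply in_map_iff in HX'. destruct HX' as [M [<- HM]].
    inversion HL; subst. right.
    assert (Hok' : allok (CTm M)) by (apply (allok_pl (c :: cs)); [apply (allok_nus ns); exact Hok|exact HX]).
    destruct Hok' as [A HA].
    destruct (progress M A HA) as [[V ->]|[[M' HM']|[E HE]]]; [left; eauto| |].
    + exfalso. apply (Hred (CTm M')). constructor; auto.
    + destruct HE as [[N ->]|[->|[[W [a ->]]|[a ->]]]].
      * exfalso. eapply Hred. apply red_fork.
      * exfalso. destruct (fresh (tnames (plug E TNewCh))) as [a Ha]. eapply Hred. apply red_newch; eauto.
      * exfalso. assert (Ha : In a ns).
        { apply (Hin2 _ HX). simpl. apply tnames_plug. simpl. apply in_app_iff; simpl; auto. }
        destruct (Hbuf a Ha) as [i [Vs [_ [_ HB]]]].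
        eapply (Hpair _ _ HB); [discriminate|apply red_give].
      * assert (Ha : In a ns).
        { apply (Hin2 _ HX). simpl. apply tnames_plug. simpl; auto. }
        destruct (Hbuf a Ha) as [i [Vs [H1 [H2 HB]]]].
        destruct Vs as [|W Vs].
        { right. exists E, i, a. auto. }
        exfalso. eapply (Hpair _ _ HB); [discriminate|apply red_take].
  - apply in_map_iff in HX'. destruct HX' as [[a Vs] [<- Hp]]. simpl in HL.
    inversion HL; subst. left. apply In_nth_error in Hp. destruct Hp as [i Hi].
    apply nth_combine in Hi. exists i, a, Vs. simpl; tauto.
Qed.
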